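(* There is a universal constant $C'>0$ such that the following holds. Let $(\Omega,Q,\pi)$ be a reversible Markov chain on a finite set and let $f$ be a positive function on $\Omega$ with $\mathbb E_\pi f=1$ and $f(\omega)\ge\delta$ for all $\omega\in\Omega$, where $\delta\in(0,1/2]$. Then $$\sum_{\omega\in\Omega}\pi(\omega)\,(f(\omega)-1)\log f(\omega)\le C'\,|\log\delta|\,{\rm Ent}_\pi(f).$$
   Context: ${\rm Ent}_\pi(f):=\mathbb E_\pi[f(\log f-\log\mathbb E_\pi f)]$. *)

(* Defs.v *)
From mathcomp Require Import all_boot all_order all_algebra.
From mathcomp Require Import all_classical all_reals.
From mathcomp Require Import exp.
Set Implicit Arguments. Unset Strict Implicit. Unset Printing Implicit Defensive.
Import Order.TTheory GRing.Theory Num.Theory.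
Local Open Scope ring_scope.

Definition reversible_chain (R : realType) (Omega : finType)
  (Q : Omega -> Omega -> R) (pi : Omega -> R) : Prop :=
  [/\ (forall x y, 0 <= Q x y),
      (forall x, \sum_(y : Omega) Q x y = 1),
      (forall x, 0 <= pi x),
      \sum_(x : Omega) pi x = 1
    & (forall x y, pi x * Q x y = pi y * Q y x)].

Definition Exp (R : realType) (Omega : finType) (pi : Omega -> R)
  (f : Omega -> R) : R := \sum_(w : Omega) pi w * f w.

Definition Ent (R : realType) (Omega : finType) (pi : Omega -> R)
  (f : Omega -> R) : R :=
  Exp pi (fun w => f w * (ln (f w) - ln (Exp pi f))).

(* Main.v *)
Require Import Defs.
From mathcomp Require Import all_boot all_order all_algebra.
From mathcomp Require Import all_classical all_reals.
From mathcomp Require Import exp.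
From mathcomp Require Import ring lra.
Import Order.TTheory GRing.Theory Num.Theory.
Local Open Scope ring_scope.

Section Aux.
Context {R : realType}.

Lemma ln_le_sub1 {y : R} : 0 < y -> ln y <= y - 1.
Proof.
move=> y0; have := @le_ln1Dx R (y - 1).
rewrite (_ : 1 + (y - 1) = y); last by rewrite addrCA subrr addr0.
apply; lra.
Qed.

Lemma ln_ge_aux {y : R} : 0 < y -> y - 1 <= y * ln y.
Proof.
move=> y0; have yi : 0 < y^-1 by rewrite invr_gt0.
have := ln_le_sub1 yi; rewrite lnV ?posrE // => h.
have : y * (1 - y^-1) <= y * ln y by rewrite ler_pM2l //; lra.
by rewrite mulrBr mulr1 mulfV ?gt_eqF.
Qed.

Lemma point (x d : R) : 0 < d -> d <= 1/2 -> d <= x ->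
  (x - 1) * ln x <= 16 * `|ln d| * (x * ln x - x + 1).
Proof.
move=> d0 dh dx.
have x0 : 0 < x by apply: (@lt_le_trans _ _ d) d0 dx.
have hd : 1/2 <= `|ln d|.
  have : ln d <= ln (1/2 : R) by rewrite ler_ln ?posrE //; lra.
  have : ln (1/2 : R) <= - (1/2).
    have h := @ln_ge_aux 2 (ltr0Sn _ 1).
    rewrite [X in ln X]mul1r lnV ?posrE //; lra.
  move=> h1 h2; rewrite ler0_norm; lra.
set s := Num.sqrt x.
have s0 : 0 < s by rewrite sqrtr_gt0.
have xs : x = s * s by rewrite -expr2 sqr_sqrtr // ltW.
have lx : ln x = 2 * ln s by rewrite xs lnM ?posrE // mulr_natl mulr2n.
have hs := ln_ge_aux s0.
have psi : (1 - s) ^+ 2 <= x * ln x - x + 1.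
  rewrite lx xs; nra.
have psi0 : 0 <= x * ln x - x + 1 by apply: le_trans psi; exact: sqr_ge0.
have K : 8 <= 16 * `|ln d| by lra.
have [x1|x1] := leP 1 x.
  have s1 : 1 <= s by rewrite /s -sqrtr1 ler_sqrt //; lra.
  have L0 : 0 <= ln s by apply: ln_ge0.
  have : (x - 1) * ln x <= 4 * (x * ln x - x + 1).
    rewrite lx xs; rewrite -subr_ge0.
    set D := (X in 0 <= X).
    have eD : s * D = (6 * s^+2 + 2) * (s * ln s - (s - 1)) + 2 * (s - 1)^+3.
      rewrite /D; ring.
    have p1 : 0 <= (6 * s^+2 + 2) * (s * ln s - (s - 1)).
      apply: mulr_ge0; last lra.
      have := sqr_ge0 s; lra.
    have p2 : 0 <= 2 * (s - 1)^+3.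
      apply: mulr_ge0; first lra. apply: exprn_ge0; lra.
    have : 0 <= s * D by rewrite eD; lra.
    by rewrite pmulr_rge0.
  move=> h; apply: le_trans h _; apply: ler_wpM2r => //; lra.
have [xh|xh] := leP (1/2) x.
  have hl := ln_le_sub1 (_ : 0 < x^-1); rewrite lnV ?posrE // in hl.
  have hl' : - ln x <= x^-1 - 1 by apply: hl; rewrite invr_gt0.
  have : x * (- ln x) <= 1 - x.
    have : x * (- ln x) <= x * (x^-1 - 1) by rewrite ler_pM2l.
    by rewrite mulrBr mulr1 mulfV ?gt_eqF.
  move=> h1.
  have s1 : s <= 1 by rewrite /s -sqrtr1 ler_sqrt //; lra.
  have : (x - 1) * ln x <= 8 * (x * ln x - x + 1).
    have e : (x - 1) * ln x = (1 - x) * (- ln x) by ring.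
    rewrite e.
    have h2 : (1 - x) * (x * - ln x) <= (1 - x) * (1 - x) by rewrite ler_wpM2l //; lra.
    have lx0 : 0 <= - ln x by rewrite oppr_ge0; apply: ln_le0; lra.
    have a0 : 0 <= (x - 1/2) * ((1 - x) * (- ln x)).
      apply: mulr_ge0; first lra. apply: mulr_ge0 => //; lra.
    have h3 : (1 - x) * (- ln x) <= 2 * (1 - x) * (1 - x).
      have ee : (1 - x) * (x * - ln x) = x * ((1 - x) * (- ln x)) by ring.
      rewrite ee in h2. lra.
    apply: le_trans h3 _.
    have : (1 - x) * (1 - x) <= 4 * (1 - s) ^+ 2.
      rewrite -subr_ge0 xs.
      have -> : 4 * (1 - s) ^+ 2 - (1 - s * s) * (1 - s * s)
        = (1 - s) ^+ 2 * ((1 - s) * (3 + s)) by ring.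
      apply: mulr_ge0; first exact: sqr_ge0.
      apply: mulr_ge0; lra.
    lra.
  move=> h; apply: le_trans h _; nra.
have s57 : s <= 5/7.
  rewrite -(@ler_pXn2r _ 2) ?nnegrE ?(ltW s0) //; last lra.
  rewrite expr2 -xs; lra.
have lnle : - ln x <= `|ln d|.
  have : ln d <= ln x by rewrite ler_ln.
  have : ln d <= 0 by apply: ln_le0; lra.
  move=> h1 h2; rewrite ler0_norm //; lra.
have lxn : ln x <= 0 by apply: ln_le0; lra.
have e : (x - 1) * ln x = (1 - x) * (- ln x) by ring.
rewrite e.
have h1 : (1 - x) * (- ln x) <= - ln x by nra.
have h2 : 4/49 <= x * ln x - x + 1 by apply: le_trans psi; nra.
have h3 : 0 <= `|ln d| := normr_ge0 _.
nra.
Qed.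

End Aux.

Theorem mainTheorem13 (R : realType) :
  exists C' : R, 0 < C' /\
  forall (Omega : finType) (Q : Omega -> Omega -> R) (pi : Omega -> R)
         (f : Omega -> R) (delta : R),
    reversible_chain Q pi ->
    (forall w, 0 < f w) ->
    Exp pi f = 1 ->
    0 < delta -> delta <= 1 / 2 ->
    (forall w, delta <= f w) ->
    \sum_(w : Omega) pi w * ((f w - 1) * ln (f w))
      <= C' * `|ln delta| * Ent pi f.
Proof.
exists 16; split; first lra.
move=> Omega Q pi f d [_ _ pi0 pi1 _] fpos Ef d0 dh fd.
have -> : Ent pi f = \sum_(w : Omega) pi w * (f w * ln (f w)).
  by rewrite /Ent Ef ln1 /Exp; apply: eq_bigr => w _; rewrite subr0.
have E : \sum_(w : Omega) pi w * (f w * ln (f w))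
  = \sum_(w : Omega) pi w * (f w * ln (f w) - f w + 1).
  under [RHS]eq_bigr => w _ do rewrite mulrDr mulrBr.
  rewrite big_split big_split /= sumrN -/(Exp pi f) Ef.
  under [X in _ + X]eq_bigr => w _ do rewrite mulr1.
  rewrite pi1; lra.
rewrite E mulr_sumr; apply: ler_sum => w _.
rewrite [X in _ <= X]mulrCA; apply: ler_wpM2l => //; exact: point.
Qed.
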